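(* Let $A$ be the bilinear form on $V_{\vec\lambda}\times V_{\vec\lambda}$ defined by \[ A((\vec\lambda,\vec\phi),(\vec\mu,\vec\psi))=-\sum_{\mathfrak n\in\mathcal N\setminus\mathcal N_{\mathrm D}}\Big[[\![\vec N_{\mathfrak e}(\vec\lambda_{\mathfrak n},\vec\phi_{\mathfrak n})\nu_{\mathfrak e}]\!]_{\mathfrak n}\cdot\vec\mu_{\mathfrak n}+[\![\vec M_{\mathfrak e}(\vec\lambda_{\mathfrak n},\vec\phi_{\mathfrak n})\nu_{\mathfrak e}]\!]_{\mathfrak n}\cdot\vec\psi_{\mathfrak n}\Big]. \] Then for all $(\vec\lambda,\vec\phi),(\vec\mu,\vec\psi)\in V_{\vec\lambda}\times V_{\vec\lambda}$, \[ A((\vec\lambda,\vec\phi),(\vec\mu,\vec\psi))=\sum_{\mathfrak e\in\mathcal E}\Big[(C_{\vec n}^{-1}\vec N_{\mathfrak e}(\vec\lambda_{\mathfrak n},\vec\phi_{\mathfrak n}),\vec N_{\mathfrak e}(\vec\mu_{\mathfrak n},\vec\psi_{\mathfrak n}))_{\mathfrak e}+(C_{\vec m}^{-1}\vec M_{\mathfrak e}(\vec\lambda_{\mathfrak n},\vec\phi_{\mathfrak n}),\vec M_{\mathfrak e}(\vec\mu_{\mathfrak n},\vec\psi_{\mathfrak n}))_{\mathfrak e}\Big]. \] Consequently $A$ is symmetric and positive definite on $V_{\vec\lambda}\times V_{\vec\lambda}$, and for every linear functional $F$ on $V_{\vec\lambda}\times V_{\vec\lambda}$ the problem of finding $(\vec\lambda,\vec\phi)\in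 V_{\vec\lambda}\times V_{\vec\lambda}$ with $A((\vec\lambda,\vec\phi),(\vec\mu,\vec\psi))=F((\vec\mu,\vec\psi))$ for all $(\vec\mu,\vec\psi)\in V_{\vec\lambda}\times V_{\vec\lambda}$ has a unique solution.
   Context: $\mathcal G=(\mathcal N,\mathcal E)$ is a finite connected graph embedded in $\mathbb R^3$: nodes are distinct points of $\mathbb R^3$, each edge $\mathfrak e$ is the straight segment joining two distinct nodes $\mathfrak n_k,\mathfrak n_\ell$ ($k<\ell$), with length $h_{\mathfrak e}=|\mathfrak n_\ell-\mathfrak n_k|$, direction $\vec i_{\mathfrak e}=(\mathfrak n_\ell-\mathfrak n_k)/h_{\mathfrak e}$, and scalar normals $\nu_{\mathfrak e}(\mathfrak n_k)=-1$, $\nu_{\mathfrak e}(\mathfrak n_\ell)=+1$; $\mathfrak n\sim\mathfrak e$ means $\mathfrak n$ is an endpoint of $\mathfrak e$. On each edge, $x$ is the arclength coordinate increasing in direction $\vec i_{\mathfrak e}$, $\partial_x$ its derivative, $\times$ the cross product. $C_{\vec n},C_{\vec m}$ are symmetric $\mathbb R^{3\times3}$-valued functions on the edges with uniform bounds $\alpha_{\vec n}|\xi|^2\le (C_{\vec n}\xi)\cdot\xi\le\beta_{\vec n}|\xi|^2$, $\alpha_{\vec m}|\xi|^2\le (C_{\vec m}\xi)\cdot\xi\le\beta_{\vec m}|\xi|^2$ for constants $0<\alpha,\beta<\infty$. Notation: $(\vec v,\vec w)_{\mathfrak e}=\int_{\mathfrak e}\vec v\cdot\vec w\,\mathrm d\sigma$;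 $\langle\vec p,\vec q\rangle_{\mathfrak e}=\sum_{\mathfrak n\sim\mathfrak e}\vec p(\mathfrak n)\cdot\vec q(\mathfrak n)$, also applied to nodal quantities. Local solver: for an edge $\mathfrak e$, nodal data $\vec u_{\mathfrak n},\vec r_{\mathfrak n}\in\mathbb R^3$ at its two endpoints, and $\vec f_{\mathfrak e},\vec g_{\mathfrak e}\in(L^2(\mathfrak e))^3$, there is a unique $\vec u_{\mathfrak e},\vec r_{\mathfrak e}\in(L^2(\mathfrak e))^3$, $\vec n_{\mathfrak e},\vec m_{\mathfrak e}\in(H^1(\mathfrak e))^3$ with, for all $\vec p,\vec q\in(H^1(\mathfrak e))^3$, $\vec v,\vec w\in(L^2(\mathfrak e))^3$: $-(C_{\vec n}^{-1}\vec n_{\mathfrak e},\vec p)_{\mathfrak e}+(\vec u_{\mathfrak e},\partial_x\vec p)_{\mathfrak e}-(\vec i_{\mathfrak e}\times\vec r_{\mathfrak e},\vec p)_{\mathfrak e}=\langle\vec u_{\mathfrak n},\vec p\,\nu_{\mathfrak e}\rangle_{\mathfrak e}$; $-(C_{\vec m}^{-1}\vec m_{\mathfrak e},\vec q)_{\mathfrak e}+(\vec r_{\mathfrak e},\partial_x\vec q)_{\mathfrak e}=\langle\vec r_{\mathfrak n},\vec q\,\nu_{\mathfrak e}\rangle_{\mathfrak e}$; $(\partial_x\vec n_{\mathfrak e},\vec v)_{\mathfrak e}=(\vec f_{\mathfrak e},\vec v)_{\mathfrak e}$; $(\vec i_{\mathfrak e}\times\vec n_{\mathfrak e},\vec w)_{\mathfrak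 e}+(\partial_x\vec m_{\mathfrak e},\vec w)_{\mathfrak e}=(\vec g_{\mathfrak e},\vec w)_{\mathfrak e}$. With $\vec f_{\mathfrak e}=\vec g_{\mathfrak e}=0$, write $\vec N_{\mathfrak e}(\vec u_{\mathfrak n},\vec r_{\mathfrak n})=\vec n_{\mathfrak e}$ and $\vec M_{\mathfrak e}(\vec u_{\mathfrak n},\vec r_{\mathfrak n})=\vec m_{\mathfrak e}$ (the argument meaning the data at both endpoints of $\mathfrak e$). A nonempty set $\mathcal N_{\mathrm D}\subset\mathcal N$ of Dirichlet nodes is fixed, and $V_{\vec\lambda}$ is the space of maps $\vec\lambda:\mathcal N\to\mathbb R^3$, $\mathfrak n\mapsto\vec\lambda_{\mathfrak n}$, with $\vec\lambda_{\mathfrak n}=0$ for $\mathfrak n\in\mathcal N_{\mathrm D}$. For edge quantities $q_{\mathfrak e}$ with values at endpoints, $[\![q_{\mathfrak e}]\!]_{\mathfrak n}=\sum_{\mathfrak e\sim\mathfrak n}q_{\mathfrak e}(\mathfrak n)$ (sum over edges adjacent to $\mathfrak n$, with $\nu_{\mathfrak e}$ evaluated at $\mathfrak n$). *)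

(* Defs.v *)
From HB Require Import structures.
From mathcomp Require Import all_boot all_order all_algebra.
From mathcomp Require Import all_classical all_reals all_analysis.
Set Implicit Arguments. Unset Strict Implicit. Unset Printing Implicit Defensive.
Import Order.TTheory GRing.Theory Num.Theory.
Import numFieldNormedType.Exports.
Local Open Scope classical_set_scope.
Local Open Scope ring_scope.

Definition dotv {R : realType} (u v : 'cV[R]_3) : R := \sum_(i < 3) u i 0 * v i 0.
Definition normv {R : realType} (u : 'cV[R]_3) : R := Num.sqrt (dotv u u).

Definition o0 : 'I_3 := @Ordinal 3 0 isT.
Definition o1 : 'I_3 := @Ordinal 3 1 isT.
Definition o2 : 'I_3 := @Ordinal 3 2 isT.

Definition crossv {R : realType} (u v : 'cV[R]_3) : 'cV[R]_3 :=
  \col_(i < 3)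
    (if val i == 0%N then u o1 0 * v o2 0 - u o2 0 * v o1 0
     else if val i == 1%N then u o2 0 * v o0 0 - u o0 0 * v o2 0
     else u o0 0 * v o1 0 - u o1 0 * v o0 0).

Definition edge_dom {R : realType} (h : R) : set R := `[0, h]%classic.

Definition L2 {R : realType} (h : R) (v : R -> 'cV[R]_3) : Prop :=
  forall i : 'I_3,
    measurable_fun (edge_dom h) (fun x => v x i 0) /\
    (\int[@lebesgue_measure R]_(x in edge_dom h) ((v x i 0) ^+ 2)%:E < +oo)%E.

(* (H^1(e))^3 : p (its absolutely continuous representative) together with its
   weak derivative dp = ∂_x p : p in L^2, dp in L^2, and p(x) = p(0) + ∫_0^x dp *)
Definition H1 {R : realType} (h : R) (p dp : R -> 'cV[R]_3) : Prop :=
  L2 h p /\ L2 h dp /\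
  forall x : R, 0 <= x <= h -> forall i : 'I_3,
    p x i 0 = p 0 i 0 + \int[@lebesgue_measure R]_(t in `[0, x]%classic) dp t i 0.

Definition ip {R : realType} (h : R) (v w : R -> 'cV[R]_3) : R :=
  \int[@lebesgue_measure R]_(x in edge_dom h) dotv (v x) (w x).

(* <p, q nu>_e with endpoint x=0 (node n_k, nu=-1) and x=h (node n_l, nu=+1);
   pa, pb are the nodal values at n_k, n_l *)
Definition bnd {R : realType} (h : R) (pa pb : 'cV[R]_3) (q : R -> 'cV[R]_3) : R :=
  - dotv pa (q 0) + dotv pb (q h).

(* the local problem on an edge of length h, direction i_e = dir,
   coefficient fields Cn, Cm, nodal data (ua,ub) for u and (ra,rb) for r,
   right-hand sides f, g; dn, dm are the weak derivatives of n, m *)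
Definition local_solution {R : realType} (h : R) (dir : 'cV[R]_3)
  (Cn Cm : R -> 'M[R]_3) (ua ub ra rb : 'cV[R]_3) (f g : R -> 'cV[R]_3)
  (u r n m dn dm : R -> 'cV[R]_3) : Prop :=
  [/\ L2 h u, L2 h r, H1 h n dn & H1 h m dm] /\
  [/\
   (forall p dp, H1 h p dp ->
      - ip h (fun x => invmx (Cn x) *m n x) p + ip h u dp
      - ip h (fun x => crossv dir (r x)) p = bnd h ua ub p),
   (forall q dq, H1 h q dq ->
      - ip h (fun x => invmx (Cm x) *m m x) q + ip h r dq = bnd h ra rb q),
   (forall v, L2 h v -> ip h dn v = ip h f v) &
   (forall w, L2 h w ->
      ip h (fun x => crossv dir (n x)) w + ip h dm w = ip h g w)].

(* nodes are 'I_nN (positions pos), an edge e joins ea e (= n_k) to eb e (= n_l), k < l *)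
Definition edge_len {R : realType} {nN : nat} {E : finType}
  (pos : 'I_nN -> 'cV[R]_3) (ea eb : E -> 'I_nN) (e : E) : R :=
  normv (pos (eb e) - pos (ea e)).

Definition edge_dir {R : realType} {nN : nat} {E : finType}
  (pos : 'I_nN -> 'cV[R]_3) (ea eb : E -> 'I_nN) (e : E) : 'cV[R]_3 :=
  (edge_len pos ea eb e)^-1 *: (pos (eb e) - pos (ea e)).

Definition adjacent {nN : nat} {E : finType} (ea eb : E -> 'I_nN) : rel 'I_nN :=
  fun x y => [exists e, ((ea e == x) && (eb e == y)) || ((ea e == y) && (eb e == x))].

Definition graph_connected {nN : nat} {E : finType} (ea eb : E -> 'I_nN) : Prop :=
  forall x y, connect (adjacent ea eb) x y.

Definition jump {R : realType} {nN : nat} {E : finType}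
  (ea eb : E -> 'I_nN) (h : E -> R) (q : E -> R -> 'cV[R]_3) (nd : 'I_nN) : 'cV[R]_3 :=
  \sum_(e | ea e == nd) (- q e 0) + \sum_(e | eb e == nd) q e (h e).

Definition inVl {R : realType} {nN : nat} (ND : {set 'I_nN}) (lam : 'I_nN -> 'cV[R]_3) : Prop :=
  forall nd, nd \in ND -> lam nd = 0.

(* local solver outputs N_e, M_e as functions of the endpoint data
   (u at n_k, u at n_l, r at n_k, r at n_l) *)
Definition edge_op (R : realType) (E : finType) :=
  E -> 'cV[R]_3 -> 'cV[R]_3 -> 'cV[R]_3 -> 'cV[R]_3 -> R -> 'cV[R]_3.

Definition at_edge {R : realType} {nN : nat} {E : finType} (ea eb : E -> 'I_nN)
  (N : edge_op R E) (lam phi : 'I_nN -> 'cV[R]_3) : E -> R -> 'cV[R]_3 :=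
  fun e => N e (lam (ea e)) (lam (eb e)) (phi (ea e)) (phi (eb e)).

Definition Aform {R : realType} {nN : nat} {E : finType}
  (pos : 'I_nN -> 'cV[R]_3) (ea eb : E -> 'I_nN) (ND : {set 'I_nN})
  (N M : edge_op R E) (lam phi mu psi : 'I_nN -> 'cV[R]_3) : R :=
  - \sum_(nd | nd \notin ND)
      (dotv (jump ea eb (edge_len pos ea eb) (at_edge ea eb N lam phi) nd) (mu nd)
     + dotv (jump ea eb (edge_len pos ea eb) (at_edge ea eb M lam phi) nd) (psi nd)).

(* Main.v *)
Require Import Defs.
From HB Require Import structures.
From mathcomp Require Import all_boot all_order all_algebra.
From mathcomp Require Import all_classical all_reals all_analysis.
Import Order.TTheory GRing.Theory Num.Theory.
Import numFieldNormedType.Exports.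
Local Open Scope classical_set_scope.
Local Open Scope ring_scope.
From mathcomp Require Import ring lra.

Section Vec.
Context {R : realType}.
Implicit Types (u v w : 'cV[R]_3).

Lemma sum3 (F : 'I_3 -> R) : \sum_(i < 3) F i = F o0 + F o1 + F o2.
Proof.
rewrite !big_ord_recr big_ord0 /= add0r.
by congr (F _ + F _ + F _); apply: val_inj.
Qed.

Lemma dotv3 u v : dotv u v = u o0 0 * v o0 0 + u o1 0 * v o1 0 + u o2 0 * v o2 0.
Proof. by rewrite /dotv sum3. Qed.

Lemma dotvC u v : dotv u v = dotv v u.
Proof. by rewrite /dotv; apply: eq_bigr => i _; rewrite mulrC. Qed.

Lemma dotvDl u v w : dotv (u + v) w = dotv u w + dotv v w.
Proof. by rewrite /dotv -big_split; apply: eq_bigr => i _; rewrite mxE mulrDl. Qed.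

Lemma dotvDr u v w : dotv w (u + v) = dotv w u + dotv w v.
Proof. by rewrite dotvC dotvDl !(dotvC w). Qed.

Lemma dotvZl (a : R) u v : dotv (a *: u) v = a * dotv u v.
Proof. by rewrite /dotv mulr_sumr; apply: eq_bigr => i _; rewrite mxE mulrA. Qed.

Lemma dotvZr (a : R) u v : dotv u (a *: v) = a * dotv u v.
Proof. by rewrite dotvC dotvZl dotvC. Qed.

Lemma dotvNl u v : dotv (- u) v = - dotv u v.
Proof. by rewrite -scaleN1r dotvZl mulN1r. Qed.

Lemma dotvNr u v : dotv u (- v) = - dotv u v.
Proof. by rewrite dotvC dotvNl dotvC. Qed.

Lemma dotvBl u v w : dotv (u - v) w = dotv u w - dotv v w.
Proof. by rewrite dotvDl dotvNl. Qed.

Lemma dotvBr u v w : dotv w (u - v) = dotv w u - dotv w v.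
Proof. by rewrite dotvDr dotvNr. Qed.

Lemma dotv0l v : dotv 0 v = 0.
Proof. by rewrite /dotv big1 // => i _; rewrite mxE mul0r. Qed.

Lemma dotv0r v : dotv v 0 = 0.
Proof. by rewrite dotvC dotv0l. Qed.

Lemma dotv_sumr (I : finType) (P : pred I) (F : I -> 'cV[R]_3) u :
  dotv u (\sum_(i | P i) F i) = \sum_(i | P i) dotv u (F i).
Proof.
elim/big_rec2: _ => [|i y1 y2 _ <-]; first by rewrite dotv0r.
by rewrite dotvDr.
Qed.

Lemma dotv_ge0 u : 0 <= dotv u u.
Proof. by rewrite /dotv sumr_ge0 // => i _; rewrite -expr2 sqr_ge0. Qed.

Lemma dotv_eq0 u : dotv u u = 0 -> u = 0.
Proof.
move=> /eqP; rewrite /dotv psumr_eq0 => [/allP H|i _]; last by rewrite -expr2 sqr_ge0.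
apply/matrixP => i j; rewrite (ord1 j) mxE.
have /H : i \in index_enum 'I_3 by rewrite mem_index_enum.
by rewrite /= mulf_eq0 orbb => /eqP.
Qed.

Lemma dotv_gt0 u : u != 0 -> 0 < dotv u u.
Proof.
move=> un; rewrite lt_neqAle dotv_ge0 andbT; apply/eqP => /esym /dotv_eq0.
by apply/eqP.
Qed.

Lemma crossv_dot (d a b : 'cV[R]_3) : dotv (crossv d a) b = - dotv (crossv d b) a.
Proof. rewrite !dotv3 !mxE /=; ring. Qed.

Lemma dotv_mulmx (A : 'M[R]_3) u v : dotv (A *m u) v = dotv u (A^T *m v).
Proof.
rewrite /dotv.
under eq_bigr do rewrite mxE big_distrl /=.
rewrite exchange_big /=; apply: eq_bigr => j _.
rewrite mxE big_distrr /=; apply: eq_bigr => i _.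
by rewrite mxE; ring.
Qed.

Lemma cs3 u v : dotv u v ^+ 2 <= dotv u u * dotv v v.
Proof.
rewrite !dotv3.
set a0 := u o0 0; set a1 := u o1 0; set a2 := u o2 0.
set b0 := v o0 0; set b1 := v o1 0; set b2 := v o2 0.
have E : (a0 * a0 + a1 * a1 + a2 * a2) * (b0 * b0 + b1 * b1 + b2 * b2)
   - (a0 * b0 + a1 * b1 + a2 * b2) ^+ 2 =
   (a0 * b1 - a1 * b0) ^+ 2 + (a0 * b2 - a2 * b0) ^+ 2 + (a1 * b2 - a2 * b1) ^+ 2
   by ring.
rewrite -subr_ge0 E.
by rewrite !addr_ge0 // sqr_ge0.
Qed.

Lemma inv_bounds (C : 'M[R]_3) (a b : R) : 0 < a -> 0 < b -> C^T = C ->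
  (forall xi, a * dotv xi xi <= dotv (C *m xi) xi <= b * dotv xi xi) ->
  forall xi, dotv xi xi / b <= dotv (invmx C *m xi) xi <= dotv xi xi / a.
Proof.
move=> a0 b0 CT HC xi.
have Cu : C \in unitmx.
  rewrite unitmxE unitfE; apply/negP => /det0P [v vn vC].
  have : dotv v^T v^T = 0.
    have /andP[H1 _] := HC v^T.
    have : dotv (C *m v^T) v^T = 0.
      by rewrite -CT -trmx_mul vC trmx0 dotv0l.
    move=> E; rewrite E in H1.
    apply/eqP; rewrite eq_le dotv_ge0 andbT.
    by rewrite -(pmulr_rle0 _ a0).
  move/dotv_eq0 => /(congr1 trmx); rewrite trmxK trmx0 => v0.
  by rewrite v0 eqxx in vn.
set eta := invmx C *m xi.
have Ceta : C *m eta = xi by rewrite /eta mulmxA mulmxV // mul1mx.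
set s := dotv eta xi.
have s1 : a * dotv eta eta <= s.
  by have /andP[H _] := HC eta; rewrite Ceta dotvC in H.
have Bsym x y : dotv (C *m x) y = dotv (C *m y) x.
  by rewrite dotv_mulmx CT dotvC.
have e1 : dotv (xi - a *: eta) (xi - a *: eta) =
   dotv xi xi - 2 * a * s + a ^+ 2 * dotv eta eta.
  rewrite !dotvBl !dotvBr !dotvZl !dotvZr (dotvC xi eta) -/s; ring.
have e2 : dotv (C *m (xi - b *: eta)) (xi - b *: eta) =
   dotv (C *m xi) xi - 2 * b * dotv xi xi + b ^+ 2 * s.
  rewrite mulmxBr -scalemxAr Ceta !dotvBl !dotvBr !dotvZl !dotvZr.
  rewrite (Bsym xi eta) Ceta -/s (dotvC xi eta) -/s; ring.
have g1 := dotv_ge0 (xi - a *: eta).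
have /andP[g2 _] := HC (xi - b *: eta).
have g2' : 0 <= dotv (C *m (xi - b *: eta)) (xi - b *: eta).
  exact: le_trans (mulr_ge0 (ltW a0) (dotv_ge0 _)) g2.
have /andP[_ g3] := HC xi.
have g4 := dotv_ge0 eta.
have g5 := dotv_ge0 xi.
rewrite -/eta -/s e1 in g1; rewrite e2 in g2'.
apply/andP; split.
  rewrite ler_pdivrMr //.
  nra.
rewrite ler_pdivlMr //.
nra.
Qed.

End Vec.

Section Ana.
Context {R : realType}.
Local Notation mu := (@lebesgue_measure R).

Lemma fine_sub_swap (a b : \bar R) : (0 <= a)%E -> (0 <= b)%E ->
  fine (b - a)%E = - fine (a - b)%E.
Proof.
case: a => [r| |] ; case: b => [s| |] //= _ _.
- by rewrite opprB.
- by rewrite oppr0.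
- by rewrite oppr0.
- by rewrite oppr0.
Qed.

Lemma Rint_opp (D : set R) (f : R -> R) :
  \int[mu]_(x in D) (- f x) = - \int[mu]_(x in D) f x.
Proof.
rewrite /Rintegral.
have -> : (fun x => (- f x)%:E) = (\- (EFin \o f))%E by apply: funext => x.
set F := EFin \o f.
rewrite [X in fine X = _]integralE [X in _ = - fine X]integralE.
rewrite (_ : (fun x => ((\- F)^\+ x)%E) = (fun x => (F^\- x)%E)); last by rewrite funeposN.
rewrite (_ : (fun x => ((\- F)^\- x)%E) = (fun x => (F^\+ x)%E)); last by rewrite funenegN.
by apply: fine_sub_swap; apply: integral_ge0 => x _.
Qed.

Lemma int_le_ge0 (D : set R) (f g : R -> \bar R) :
  (forall x, D x -> (0 <= f x)%E) -> (forall x, D x -> (f x <= g x)%E) ->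
  (\int[mu]_(x in D) f x <= \int[mu]_(x in D) g x)%E.
Proof.
move=> f0 fg.
have g0 : forall x, D x -> (0 <= g x)%E by move=> x Dx; exact: le_trans (f0 x Dx) (fg x Dx).
rewrite (@ge0_integralE _ _ _ mu D f f0) (@ge0_integralE _ _ _ mu D g g0) /=.
apply: ge_ereal_sup => _ [hh hf <-].
apply: ereal_sup_ubound; exists hh => // x.
apply: le_trans (hf x) _.
rewrite /patch; case: ifP => // /set_mem Dx; exact: fg.
Qed.

Lemma mu_itv (x : R) : 0 <= x -> mu `[0, x]%classic = x%:E.
Proof.
move=> x0; rewrite lebesgue_measure_itv /=.
case: ifP => [_|]; first by rewrite sube0.
rewrite lte_fin => /negbT; rewrite -leNgt => x0'.
by congr (_%:E); apply/eqP; rewrite eq_le x0 x0'.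
Qed.

Lemma int_cst_itv (x c : R) : 0 <= x ->
  (\int[mu]_(t in `[0%R, x]) c%:E = (c * x)%:E)%E.
Proof. by move=> x0; rewrite integral_cst //= mu_itv. Qed.

Lemma Rint_cst_itv (x c : R) : 0 <= x -> \int[mu]_(t in `[0, x]%classic) c = c * x.
Proof. by move=> x0; rewrite /Rintegral int_cst_itv. Qed.

Lemma int_bound (h k K : R) (g : R -> R) : 0 <= h -> 0 <= k ->
  (forall x, `[0, h]%classic x -> k <= g x <= K) ->
  k * h <= \int[mu]_(x in `[0, h]%classic) g x /\
  (\int[mu]_(x in `[0%R, h]) (g x)%:E < +oo)%E.
Proof.
move=> h0 k0 Hg.
have lo : ((k * h)%:E <= \int[mu]_(x in `[0%R, h]) (g x)%:E)%E.
  rewrite -int_cst_itv //; apply: int_le_ge0 => x Dx; first by rewrite lee_fin.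
  by rewrite lee_fin; case/andP: (Hg x Dx).
have hi : (\int[mu]_(x in `[0%R, h]) (g x)%:E <= (K * h)%:E)%E.
  rewrite -int_cst_itv //; apply: int_le_ge0 => x Dx.
    by rewrite lee_fin; case/andP: (Hg x Dx) => H1 _; exact: le_trans k0 H1.
  by rewrite lee_fin; case/andP: (Hg x Dx).
split; last by apply: le_lt_trans hi _; rewrite ltry.
have fin : (\int[mu]_(x in `[0%R, h]) (g x)%:E)%E \is a fin_num.
  rewrite ge0_fin_numE; last by apply: le_trans lo; rewrite lee_fin mulr_ge0.
  by apply: le_lt_trans hi _; rewrite ltry.
by rewrite /Rintegral -lee_fin fineK.
Qed.

End Ana.

Section Test.
Context {R : realType}.
Local Notation mu := (@lebesgue_measure R).

Lemma L2_bounded (h : R) (v : R -> 'cV[R]_3) : 0 <= h ->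
  (forall i, measurable_fun (edge_dom h) (fun x => v x i 0)) ->
  (forall i, exists K, forall x, edge_dom h x -> (v x i 0) ^+ 2 <= K) -> L2 h v.
Proof.
move=> h0 mv bv i; split => //.
have [K HK] := bv i.
have := @int_bound R h 0 K (fun x => (v x i 0) ^+ 2) h0 (lexx _).
case=> [x Dx|_ //]; by rewrite sqr_ge0 HK.
Qed.

Lemma H1_const (h : R) (c : 'cV[R]_3) : 0 <= h -> H1 h (fun _ => c) (fun _ => 0).
Proof.
move=> h0; split; [|split].
- apply: L2_bounded => // i.
  by exists ((c i 0) ^+ 2) => x _.
- apply: L2_bounded => // i.
  by exists 0 => x _; rewrite mxE expr0n.
- move=> x /andP[x0 _] i.
  under eq_Rintegral do rewrite mxE.
  by rewrite Rint_cst_itv // mul0r addr0.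

Qed.

Lemma H1_lin (h : R) (w : 'cV[R]_3) : 0 <= h -> H1 h (fun t => t *: w) (fun _ => w).
Proof.
move=> h0; split; [|split].
- apply: L2_bounded => // i.
    have -> : (fun x : R => (x *: w) i 0) = (fun x => x * w i 0) by apply: funext => x; rewrite mxE.
    by apply: measurable_realfun.measurable_funM; [exact: measurable_id|exact: measurable_cst].
  exists ((h * w i 0) ^+ 2) => x; rewrite /edge_dom /= in_itv /= => /andP[x0 xh].
  rewrite mxE !exprMn ler_wpM2r ?sqr_ge0 //.
  by rewrite ler_sqr ?nnegrE.
- apply: L2_bounded => // i.
  by exists ((w i 0) ^+ 2) => x _.
- move=> x /andP[x0 _] i.
  by rewrite Rint_cst_itv // !mxE mul0r add0r mulrC.
Qed.

Definition itest (t : R) (i : 'I_3) : R -> 'cV[R]_3 :=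
  fun s => (\1_(`[0, t]%classic) s : R) *: delta_mx i 0.

Lemma dotv_delta (u : 'cV[R]_3) i : dotv u (delta_mx i 0) = u i 0.
Proof.
rewrite /dotv (bigD1 i) //= big1 => [|j ji]; last by rewrite mxE (negbTE ji) /= mulr0.
by rewrite mxE !eqxx /= mulr1 addr0.
Qed.

Lemma itest_L2 (h t : R) i : 0 <= h -> L2 h (itest t i).
Proof.
move=> h0; apply: L2_bounded => // j.
  apply: (eq_measurable_fun (fun s => (\1_(`[0, t]%classic) s : R) * delta_mx i 0 j 0)).
    by move=> x _ /=; rewrite /itest [in RHS]mxE.
  apply: measurable_realfun.measurable_funM; last exact: measurable_cst.
  apply: measurable_realfun.measurable_indic; exact: measurable_itv.
exists 1 => x _; rewrite /itest mxE [delta_mx _ _ _ _]mxE.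
rewrite indicE; case: (x \in _); case: (_ && _); rewrite /= ?mulr1 ?mulr0 ?expr0n ?expr1n //.
Qed.

Lemma ip_itest (h t : R) i (f : R -> 'cV[R]_3) : 0 <= t <= h ->
  ip h f (itest t i) = \int[mu]_(s in `[0, t]%classic) f s i 0.
Proof.
move=> /andP[t0 th].
rewrite /ip /itest.
under eq_Rintegral do rewrite dotvZr dotv_delta.
have E : (edge_dom h `&` `[0, t]%classic) = `[0, t]%classic.
  rewrite setIidr // => x /=; rewrite /edge_dom /= !in_itv /= => /andP[-> xt] /=.
  exact: le_trans xt th.
rewrite -[in RHS]E.
rewrite Rintegral_mkcondr; apply: eq_Rintegral => s _.
by rewrite patch_indic /= mulrC.
Qed.

End Test.

Section Local.
Context {R : realType}.
Local Notation mu := (@lebesgue_measure R).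

Lemma ip_zero (h : R) (f g : R -> 'cV[R]_3) :
  (forall x, edge_dom h x -> dotv (f x) (g x) = 0) -> ip h f g = 0.
Proof.
move=> H; rewrite /ip (@eq_Rintegral _ _ _ mu _ (fun _ => 0)).
  by rewrite /Rintegral integral0.
by move=> x; rewrite inE => /H.
Qed.

Lemma ipC (h : R) (f g : R -> 'cV[R]_3) : ip h f g = ip h g f.
Proof. by rewrite /ip; under eq_Rintegral do rewrite dotvC. Qed.

Lemma crossv0r (d : 'cV[R]_3) : crossv d 0 = 0.
Proof.
rewrite /crossv; apply/matrixP => i j; rewrite !mxE !mulr0 subrr.
by case: ifP => //; case: ifP.
Qed.

Lemma in_dom (h x : R) : edge_dom h x = (0 <= x <= h).
Proof. by rewrite /edge_dom /= in_itv. Qed.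

Variables (h : R) (dir : 'cV[R]_3) (Cn Cm : R -> 'M[R]_3).

Lemma loc_n ua ub ra rb u r n m dn dm : 0 <= h ->
  local_solution h dir Cn Cm ua ub ra rb (fun _ => 0) (fun _ => 0) u r n m dn dm ->
  forall t, 0 <= t <= h -> n t = n 0.
Proof.
move=> h0 [[Lu Lr [Ln [Ldn Hn]] Hm]] [e1 e2 e3 e4] t th.
apply/matrixP => i j; rewrite (ord1 j).
have := e3 (itest t i) (itest_L2 h t i h0).
rewrite ip_itest // ip_zero => [E|x _]; last by rewrite dotv0l.
by rewrite Hn // E addr0.
Qed.

Lemma loc_m ua ub ra rb u r n m dn dm : 0 <= h ->
  local_solution h dir Cn Cm ua ub ra rb (fun _ => 0) (fun _ => 0) u r n m dn dm ->
  forall t, 0 <= t <= h -> m t = m 0 - t *: crossv dir (n 0).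
Proof.
move=> h0 S; have Sn := loc_n _ _ _ _ _ _ _ _ _ _ h0 S.
move: S => [[Lu Lr [Ln [Ldn Hn]] [Lm [Ldm Hm]]]] [e1 e2 e3 e4] t th.
apply/matrixP => i j; rewrite (ord1 j).
have := e4 (itest t i) (itest_L2 h t i h0).
rewrite [in RHS]ip_zero => [|x _]; last by rewrite dotv0l.
rewrite !ip_itest // => E.
rewrite (@eq_Rintegral _ _ _ mu _ (fun _ => crossv dir (n 0) i 0)) in E; last first.
  move=> s; rewrite inE /= in_itv /= => /andP[s0 st].
  rewrite Sn // s0 /=; exact: le_trans st (proj2 (andP th)).
rewrite Rint_cst_itv in E; last by case/andP: th.
set X := crossv dir (n 0) in E *.
rewrite Hm // !mxE.
have -> : \int[mu]_(s in `[0, t]%classic) dm s i 0 = - (X i 0 * t).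
  by apply/eqP; rewrite -subr_eq0 opprK addrC E.
by rewrite /X /crossv mxE mulrC.
Qed.

Lemma loc_energy ua ub ra rb u r n m dn dm ua' ub' ra' rb' u' r' n' m' dn' dm' :
  local_solution h dir Cn Cm ua ub ra rb (fun _ => 0) (fun _ => 0) u r n m dn dm ->
  local_solution h dir Cn Cm ua' ub' ra' rb' (fun _ => 0) (fun _ => 0) u' r' n' m' dn' dm' ->
  - ip h (fun x => invmx (Cn x) *m n x) n' - ip h (fun x => invmx (Cm x) *m m x) m'
  = bnd h ua ub n' + bnd h ra rb m'.
Proof.
move=> [[Lu Lr Hn Hm]] [e1 e2 e3 e4] [[Lu' Lr' Hn' Hm']] [e1' e2' e3' e4'].
have E1 := e1 _ _ Hn'.
have E2 := e2 _ _ Hm'.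
have E3 : ip h u dn' = 0.
  rewrite ipC e3' // ip_zero // => x _; exact: dotv0l.
have E4 := e4' r Lr.
rewrite (ip_zero h (fun _ => 0) r) in E4; last by move=> x _; exact: dotv0l.
have E5 : ip h (fun x => crossv dir (n' x)) r = - ip h (fun x => crossv dir (r x)) n'.
  by rewrite /ip -Rint_opp; apply: eq_Rintegral => x _; rewrite crossv_dot.
rewrite E5 in E4.
have E6 : ip h r dm' = ip h (fun x => crossv dir (r x)) n'.
  by rewrite ipC; lra.
rewrite E3 E6 in E1 E2.
rewrite -E1 -E2; ring.
Qed.


Lemma const_zero (C : R -> 'M[R]_3) (a b : R) (v0 : 'cV[R]_3) : 0 < h -> 0 < a -> 0 < b ->
  (forall x, 0 <= x <= h -> ((C x)^T = C x) /\ (forall xi, a * dotv xi xi <= dotv (C x *m xi) xi <= b * dotv xi xi)) ->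
  ip h (fun x => invmx (C x) *m v0) (fun _ => v0) = 0 -> v0 = 0.
Proof.
move=> h0 a0 b0 HC E.
have HB : forall x, `[0, h]%classic x ->
    dotv v0 v0 / b <= dotv (invmx (C x) *m v0) v0 <= dotv v0 v0 / a.
  move=> x; rewrite -/(edge_dom h x) in_dom => /HC [CT Hb].
  exact: inv_bounds a0 b0 CT Hb v0.
have [lo _] := @int_bound R h (dotv v0 v0 / b) (dotv v0 v0 / a)
  (fun x => dotv (invmx (C x) *m v0) v0) (ltW h0) (divr_ge0 (dotv_ge0 _) (ltW b0)) HB.
rewrite -/(ip h _ _) E in lo.
apply: dotv_eq0; apply/eqP; rewrite eq_le dotv_ge0 andbT.
have : dotv v0 v0 / b <= 0 by rewrite -(pmulr_lle0 _ h0).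
by rewrite pmulr_lle0 ?invr_gt0.
Qed.

Lemma ipC_ge0 (C : R -> 'M[R]_3) (a b : R) (f : R -> 'cV[R]_3) : 0 < a -> 0 < b ->
  (forall x, 0 <= x <= h -> ((C x)^T = C x) /\ (forall xi, a * dotv xi xi <= dotv (C x *m xi) xi <= b * dotv xi xi)) ->
  0 <= ip h (fun x => invmx (C x) *m f x) f.
Proof.
move=> a0 b0 HC; apply: Rintegral_ge0 => x; rewrite in_dom => /HC [CT Hb].
have /andP[H _] := inv_bounds (C x) a b a0 b0 CT Hb (f x).
exact: le_trans (divr_ge0 (dotv_ge0 _) (ltW b0)) H.
Qed.

Lemma ipC_sym (C : R -> 'M[R]_3) (f g : R -> 'cV[R]_3) :
  (forall x, 0 <= x <= h -> (C x)^T = C x) ->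
  ip h (fun x => invmx (C x) *m f x) g = ip h (fun x => invmx (C x) *m g x) f.
Proof.
move=> HC; apply: eq_Rintegral => x; rewrite inE in_dom => /HC CT.
by rewrite dotv_mulmx trmx_inv CT dotvC.
Qed.

Lemma loc_zero an bn am bm ua ub ra rb u r n m dn dm :
  0 < h -> 0 < an -> 0 < bn -> 0 < am -> 0 < bm ->
  (forall x, 0 <= x <= h -> [/\ (Cn x)^T = Cn x, (Cm x)^T = Cm x,
      forall xi, an * dotv xi xi <= dotv (Cn x *m xi) xi <= bn * dotv xi xi &
      forall xi, am * dotv xi xi <= dotv (Cm x *m xi) xi <= bm * dotv xi xi]) ->
  local_solution h dir Cn Cm ua ub ra rb (fun _ => 0) (fun _ => 0) u r n m dn dm ->
  ip h (fun x => invmx (Cn x) *m n x) n = 0 ->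
  ip h (fun x => invmx (Cm x) *m m x) m = 0 ->
  ra = rb /\ (ra = 0 -> ua = ub).
Proof.
move=> h0 an0 bn0 am0 bm0 HC S En Em.
have Sn := loc_n _ _ _ _ _ _ _ _ _ _ (ltW h0) S.
have Sm := loc_m _ _ _ _ _ _ _ _ _ _ (ltW h0) S.
have HCn : forall x, 0 <= x <= h -> ((Cn x)^T = Cn x) /\ (forall xi, an * dotv xi xi <= dotv (Cn x *m xi) xi <= bn * dotv xi xi).
  by move=> x /HC [].
have HCm : forall x, 0 <= x <= h -> ((Cm x)^T = Cm x) /\ (forall xi, am * dotv xi xi <= dotv (Cm x *m xi) xi <= bm * dotv xi xi).
  by move=> x /HC [].
have n0 : n 0 = 0.
  apply: (const_zero _ _ _ _ h0 an0 bn0 HCn).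
  transitivity (ip h (fun x => invmx (Cn x) *m n x) n); last exact: En.
  by apply: eq_Rintegral => x; rewrite inE in_dom => /Sn ->.
rewrite n0 crossv0r in Sm.
have m0 : m 0 = 0.
  apply: (const_zero _ _ _ _ h0 am0 bm0 HCm).
  transitivity (ip h (fun x => invmx (Cm x) *m m x) m); last exact: Em.
  by apply: eq_Rintegral => x; rewrite inE in_dom => /Sm ->; rewrite scaler0 subr0.
have nz : forall x, edge_dom h x -> n x = 0 by move=> x; rewrite in_dom => /Sn ->.
have mz : forall x, edge_dom h x -> m x = 0.
  by move=> x; rewrite in_dom => /Sm ->; rewrite m0 scaler0 subr0.
move: S => [[Lu Lr Hn Hm]] [e1 e2 e3 e4].
have rab : ra = rb.
  have := e2 _ _ (H1_const h (rb - ra) (ltW h0)).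
  rewrite !ip_zero => [|x _|x Dx]; last 2 first.
  - exact: dotv0r.
  - by rewrite mz // mulmx0 dotv0l.
  rewrite /bnd oppr0 addr0 addrC -dotvBl => /esym /dotv_eq0 /subr0_eq.
  by move=> ->.
split=> // ra0.
set c := ub - ua; set w := crossv dir c.
have Ew : ip h r (fun _ => w) = 0.
  have := e2 _ _ (H1_lin h w (ltW h0)).
  rewrite ip_zero => [|x Dx]; last by rewrite mz // mulmx0 dotv0l.
  by rewrite /bnd -rab ra0 !dotv0l oppr0 !add0r.
have := e1 _ _ (H1_const h c (ltW h0)).
rewrite ip_zero => [|x Dx]; last by rewrite nz // mulmx0 dotv0l.
rewrite (ip_zero h u) => [|x _]; last exact: dotv0r.
have -> : ip h (fun x => crossv dir (r x)) (fun _ => c) = - ip h r (fun _ => w).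
  rewrite /ip -Rint_opp; apply: eq_Rintegral => x _.
  by rewrite crossv_dot dotvC.
rewrite Ew /bnd oppr0 subr0 addr0 addrC -dotvBl -/c => /esym /dotv_eq0 /subr0_eq.
by move=> ->.
Qed.

End Local.

Arguments loc_energy {R h dir Cn Cm ua ub ra rb u r n m dn dm ua' ub' ra' rb' u' r' n' m' dn' dm'}.
Arguments loc_zero {R h dir Cn Cm an bn am bm ua ub ra rb u r n m dn dm}.
Arguments ipC_sym {R h C f g}.

Lemma sum_part {R : realType} {nN : nat} {E : finType} (f : E -> 'I_nN) (F : E -> 'I_nN -> R) :
  \sum_(nd : 'I_nN) \sum_(e | f e == nd) F e nd = \sum_e F e (f e).
Proof.
under eq_bigr do rewrite big_mkcond.
rewrite exchange_big; apply: eq_bigr => e _ /=.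
rewrite (bigD1 (f e)) //= eqxx big1 ?addr0 // => nd ne.
by rewrite eq_sym (negbTE ne).
Qed.

Lemma dotv_suml {R : realType} (I : finType) (P : pred I) (F : I -> 'cV[R]_3) u :
  dotv (\sum_(i | P i) F i) u = \sum_(i | P i) dotv (F i) u.
Proof. by rewrite dotvC dotv_sumr; apply: eq_bigr => i _; rewrite dotvC. Qed.

Lemma jump_sum {R : realType} {nN : nat} {E : finType} (ea eb : E -> 'I_nN)
  (h : E -> R) (q : E -> R -> 'cV[R]_3) (mu : 'I_nN -> 'cV[R]_3) :
  \sum_nd dotv (jump ea eb h q nd) (mu nd) = \sum_e bnd (h e) (mu (ea e)) (mu (eb e)) (q e).
Proof.
rewrite /jump.
under eq_bigr do rewrite dotvDl !dotv_suml.
rewrite big_split /= !(sum_part _ (fun e nd => dotv _ (mu nd))) -big_split /=.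
apply: eq_bigr => e _; rewrite /bnd dotvNl !(dotvC (mu _)).
by [].
Qed.

Lemma const_graph {nN : nat} {E : finType} (ea eb : E -> 'I_nN) (T : eqType)
  (f : 'I_nN -> T) : graph_connected ea eb -> (forall e, f (ea e) = f (eb e)) ->
  forall x y, f x = f y.
Proof.
move=> Hc Hf x y.
have cl : fingraph.closed (Defs.adjacent ea eb) [pred z | f z == f x].
  move=> u v /existsP [e /orP[] /andP[/eqP <- /eqP <-]]; by rewrite !inE Hf.
have := closed_connect cl (Hc x y); rewrite !inE eqxx => /esym /eqP.
by move=> ->.
Qed.



Lemma Aform_lin2 {R : realType} {nN : nat} {E : finType}
  (pos : 'I_nN -> 'cV[R]_3) (ea eb : E -> 'I_nN) (ND : {set 'I_nN})
  (N M : edge_op R E) lam phi (a : R) mu1 psi1 mu2 psi2 :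
  Aform pos ea eb ND N M lam phi (fun nd => a *: mu1 nd + mu2 nd) (fun nd => a *: psi1 nd + psi2 nd)
  = a * Aform pos ea eb ND N M lam phi mu1 psi1 + Aform pos ea eb ND N M lam phi mu2 psi2.
Proof.
rewrite /Aform mulrN -opprD; congr (- _).
rewrite mulr_sumr -big_split; apply: eq_bigr => nd _.
rewrite (dotvDr (a *: mu1 nd)) (dotvDr (a *: psi1 nd)) !dotvZr /=; ring.
Qed.

Section LA.
Context {R : realType} {K : finType}.

Lemma sum_enum (F : K -> R) : \sum_k F k = \sum_(i < #|K|) F (enum_val i).
Proof. by rewrite (reindex (@enum_val K K)) //; apply: onW_bij; exact: enum_val_bij. Qed.

Lemma riesz_full (G : K -> K -> R) :
  (forall c : K -> R, (exists k, c k != 0) -> 0 < \sum_k \sum_l c k * G k l * c l) ->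
  forall f : K -> R, exists c : K -> R, forall l, \sum_k c k * G k l = f l.
Proof.
move=> pd f.
pose n := #|K|.
pose Gm : 'M[R]_n := \matrix_(i, j) G (enum_val i) (enum_val j).
pose fv : 'rV[R]_n := \row_j f (enum_val j).
have Gu : Gm \in unitmx.
  rewrite unitmxE unitfE; apply/negP => /det0P [v vn vG].
  pose c k := v 0 (enum_rank k).
  have cn : exists k, c k != 0.
    apply/existsP; apply: contraNT vn; rewrite negb_exists => /forallP H.
    apply/eqP/matrixP => i j; rewrite (ord1 i) mxE.
    by have := H (enum_val j); rewrite /c enum_valK negbK => /eqP.
  have := pd c cn.
  rewrite sum_enum.
  have -> : \sum_(i < #|K|) \sum_l c (enum_val i) * G (enum_val i) l * c l =
            \sum_(j < #|K|) (v *m Gm) 0 j * v 0 j.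
    under eq_bigr => i _ do rewrite (sum_enum (fun l => c (enum_val i) * G (enum_val i) l * c l)).
    rewrite exchange_big /=; apply: eq_bigr => j _.
    rewrite mxE big_distrl /=; apply: eq_bigr => i _.
    by rewrite /c !enum_valK mxE.
  by rewrite vG big1 ?ltxx // => j _; rewrite mxE mul0r.
pose cv := fv *m invmx Gm.
have Hc : cv *m Gm = fv by rewrite /cv mulmxKV.
exists (fun k => cv 0 (enum_rank k)) => l.
rewrite sum_enum.
have := congr1 (fun M : 'rV[R]_n => M 0 (enum_rank l)) Hc; rewrite /= !mxE enum_rankK => <-.
by apply: eq_bigr => i _; rewrite enum_valK [Gm _ _]mxE enum_rankK.
Qed.

Lemma riesz_sub (P : pred K) (G : K -> K -> R) :
  (forall c : K -> R, (exists k, P k && (c k != 0)) ->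
     0 < \sum_(k | P k) \sum_(l | P l) c k * G k l * c l) ->
  forall f : K -> R, exists c : K -> R, (forall k, ~~ P k -> c k = 0) /\
     forall l, P l -> \sum_(k | P k) c k * G k l = f l.
Proof.
move=> pd f.
pose G' k l := if P k && P l then G k l else (k == l)%:R.
have pd' : forall c : K -> R, (exists k, c k != 0) -> 0 < \sum_k \sum_l c k * G' k l * c l.
  move=> c [k ck].
  have split_kl : forall k l, c k * G' k l * c l =
     (if P k && P l then c k * G k l * c l else 0) + (if ~~ P k && (k == l) then c k * c l else 0).
    move=> k' l'; rewrite /G'.
    have [<-|kl] := eqVneq k' l'.
      by case: (P k') => /=; rewrite ?addr0 ?add0r ?eqxx ?mulr1.
    by case: (P k'); case: (P l') => /=; rewrite ?(negbTE kl) ?mulr0 ?mul0r ?addr0.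
  have E0 : \sum_k0 \sum_l c k0 * G' k0 l * c l =
     \sum_k0 \sum_l (if P k0 && P l then c k0 * G k0 l * c l else 0) +
     \sum_k0 \sum_l (if ~~ P k0 && (k0 == l) then c k0 * c l else 0).
    rewrite -big_split; apply: eq_bigr => k0 _; rewrite -big_split.
    by apply: eq_bigr => l _; exact: split_kl.
  rewrite E0.
  have E2 : \sum_k0 \sum_l (if ~~ P k0 && (k0 == l) then c k0 * c l else 0) =
            \sum_(k0 | ~~ P k0) c k0 ^+ 2.
    rewrite [RHS]big_mkcond /=; apply: eq_bigr => k0 _.
    case: (P k0) => /=; first by rewrite big1.
    rewrite (bigD1 k0) //= eqxx big1 ?addr0 ?expr2 // => l lk; by rewrite eq_sym (negbTE lk).
  have E1 : \sum_k0 \sum_l (if P k0 && P l then c k0 * G k0 l * c l else 0) =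
            \sum_(k0 | P k0) \sum_(l | P l) c k0 * G k0 l * c l.
    rewrite [RHS]big_mkcond /=; apply: eq_bigr => k0 _.
    case: (P k0) => /=; first by rewrite [RHS]big_mkcond.
    by rewrite big1.
  rewrite E1 E2.
  have q2 : 0 <= \sum_(k0 | ~~ P k0) c k0 ^+ 2 by apply: sumr_ge0 => *; exact: sqr_ge0.
  case Pk: (P k).
    by apply: ltr_wpDr q2 _; apply: pd; exists k; rewrite Pk.
  have q1 : 0 <= \sum_(k0 | P k0) \sum_(l | P l) c k0 * G k0 l * c l.
    have [H|H] := boolP [exists k0, P k0 && (c k0 != 0)].
      by apply/ltW/pd/existsP.
    rewrite big1 // => k0 Pk0; rewrite big1 // => l Pl.
    move: H; rewrite negb_exists => /forallP /(_ k0); rewrite Pk0 /= negbK => /eqP ->.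
    by rewrite !mul0r.
  apply: ltr_pwDr _ q1.
  rewrite (bigD1 k) /=; last by rewrite Pk.
  apply: ltr_wpDr; first by apply: sumr_ge0 => *; exact: sqr_ge0.
  by rewrite exprn_even_gt0 //.
have [c Hc] := riesz_full G' pd' (fun l => if P l then f l else 0).
have cz : forall k, ~~ P k -> c k = 0.
  move=> k Pk; have := Hc k; rewrite (negbTE Pk) => <-.
  rewrite (bigD1 k) //= big1 => [|k0 k0k]; first by rewrite /G' (negbTE Pk) eqxx mulr1 addr0.
  by rewrite /G' (negbTE Pk) andbF (negbTE k0k) mulr0.
exists c; split => // l Pl; have := Hc l; rewrite Pl => <-.
rewrite [LHS]big_mkcond /=; apply: eq_bigr => k _.
rewrite /G'; case Pk: (P k); rewrite ?Pl //=.
by rewrite cz ?Pk // mul0r.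
Qed.

End LA.

Section Riesz.
Context (R : realType) (nN : nat) (ND : {set 'I_nN}).
Local Notation fT := ('I_nN -> 'cV[R]_3).
Context (A : fT -> fT -> fT -> fT -> R).
Hypothesis Alin2 : forall lam phi (a : R) mu1 psi1 mu2 psi2,
  A lam phi (fun nd => a *: mu1 nd + mu2 nd) (fun nd => a *: psi1 nd + psi2 nd)
  = a * A lam phi mu1 psi1 + A lam phi mu2 psi2.
Hypothesis Asym : forall lam phi mu psi, inVl ND lam -> inVl ND phi -> inVl ND mu -> inVl ND psi ->
      A lam phi mu psi = A mu psi lam phi.
Hypothesis Apd : forall lam phi, inVl ND lam -> inVl ND phi ->
      (exists nd, lam nd != 0 \/ phi nd != 0) -> 0 < A lam phi lam phi.

Local Notation K := ('I_nN * 'I_3 * bool)%type.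
Definition free (k : K) := k.1.1 \notin ND.
Definition lin1 (c : K -> R) : fT := fun nd => \col_i c (nd, i, false).
Definition lin2 (c : K -> R) : fT := fun nd => \col_i c (nd, i, true).
Definition coord (lam phi : fT) (k : K) : R :=
  if k.2 then phi k.1.1 k.1.2 0 else lam k.1.1 k.1.2 0.
Definition dlt (k : K) : K -> R := fun k' => (k' == k)%:R.

Lemma lin1_coord lam phi : lin1 (coord lam phi) = lam.
Proof. by apply: funext => nd; apply/matrixP => i j; rewrite (ord1 j) mxE. Qed.
Lemma lin2_coord lam phi : lin2 (coord lam phi) = phi.
Proof. by apply: funext => nd; apply/matrixP => i j; rewrite (ord1 j) mxE. Qed.

Lemma inV_lin (c : K -> R) : (forall k, ~~ free k -> c k = 0) ->
  inVl ND (lin1 c) /\ inVl ND (lin2 c).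
Proof.
move=> cz; split => nd ndND; apply/matrixP => i j; rewrite !mxE cz //;
  by rewrite /free /= ndND.
Qed.

Lemma coord_V lam phi : inVl ND lam -> inVl ND phi ->
  forall k, ~~ free k -> coord lam phi k = 0.
Proof.
move=> Vl Vp [[nd i] b]; rewrite /free /= negbK => ndND.
by rewrite /coord; case: b; rewrite ?Vl ?Vp // mxE.
Qed.

Lemma inV_comb (a : R) (x1 x2 : fT) : inVl ND x1 -> inVl ND x2 ->
  inVl ND (fun nd => a *: x1 nd + x2 nd).
Proof. by move=> V1 V2 nd ndND; rewrite V1 // V2 // scaler0 addr0. Qed.

Lemma lin1_comb (a : R) (c1 c2 : K -> R) :
  lin1 (fun k => a * c1 k + c2 k) = (fun nd => a *: lin1 c1 nd + lin1 c2 nd).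
Proof. by apply: funext => nd; apply/matrixP => i j; rewrite !mxE. Qed.
Lemma lin2_comb (a : R) (c1 c2 : K -> R) :
  lin2 (fun k => a * c1 k + c2 k) = (fun nd => a *: lin2 c1 nd + lin2 c2 nd).
Proof. by apply: funext => nd; apply/matrixP => i j; rewrite !mxE. Qed.

Lemma lin_zero1 : lin1 (fun _ => 0) = (fun _ => 0).
Proof. by apply: funext => nd; apply/matrixP => i j; rewrite !mxE. Qed.
Lemma lin_zero2 : lin2 (fun _ => 0) = (fun _ => 0).
Proof. by apply: funext => nd; apply/matrixP => i j; rewrite !mxE. Qed.

Lemma dlt_V k : free k -> forall k', ~~ free k' -> dlt k k' = 0.
Proof.
move=> fk k' fk'; rewrite /dlt; case: eqP => // E.
by rewrite E fk in fk'.
Qed.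

Lemma expand (T : fT -> fT -> R) :
  (forall (a : R) x1 y1 x2 y2, inVl ND x1 -> inVl ND y1 -> inVl ND x2 -> inVl ND y2 ->
     T (fun nd => a *: x1 nd + x2 nd) (fun nd => a *: y1 nd + y2 nd) = a * T x1 y1 + T x2 y2) ->
  forall c : K -> R, (forall k, ~~ free k -> c k = 0) ->
  T (lin1 c) (lin2 c) = \sum_(k | free k) c k * T (lin1 (dlt k)) (lin2 (dlt k)).
Proof.
move=> linT c cz.
have z0 : inVl ND (fun _ : 'I_nN => (0 : 'cV[R]_3)) by [].
have T0 : T (fun _ => 0) (fun _ => 0) = 0.
  have := linT 1 _ _ _ _ z0 z0 z0 z0.
  have -> : (fun _ : 'I_nN => 1 *: (0 : 'cV[R]_3) + 0) = (fun _ => 0).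
    by apply: funext => nd; rewrite scaler0 addr0.
  by rewrite mul1r => E; lra.
pose cs (s : seq K) := fun k' => \sum_(k <- s) c k * dlt k k'.
have Hs : forall s, all free s ->
   T (lin1 (cs s)) (lin2 (cs s)) = \sum_(k <- s) c k * T (lin1 (dlt k)) (lin2 (dlt k)).
  elim=> [|k s IH] /=.
    move=> _; rewrite big_nil.
    have -> : cs [::] = fun _ => 0 by apply: funext => k'; rewrite /cs big_nil.
    by rewrite lin_zero1 lin_zero2.
  move=> /andP[fk fs].
  have -> : cs (k :: s) = fun k' => c k * dlt k k' + cs s k'.
    by apply: funext => k'; rewrite /cs big_cons.
  rewrite lin1_comb lin2_comb big_cons -IH //.
  have csV : forall k', ~~ free k' -> cs s k' = 0.
    move=> k' fk'; rewrite /cs big_seq big1 // => k0 k0s.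
    by rewrite dlt_V ?mulr0 //; exact: (allP fs).
  have [V1 V2] := inV_lin _ (dlt_V k fk).
  have [V3 V4] := inV_lin _ csV.
  by rewrite linT.
have := Hs (enum [pred k | free k]).
rewrite big_enum /=.
have -> : cs (enum [pred k | free k]) = c.
  apply: funext => k'; rewrite /cs big_enum /=.
  have [fk'|fk'] := boolP (free k').
    rewrite (bigD1 k') //= /dlt eqxx mulr1 big1 ?addr0 // => k0 /andP[_ k0k].
    by rewrite eq_sym (negbTE k0k) mulr0.
  rewrite cz // big1 // => k0 fk0; rewrite dlt_V ?mulr0 //.
apply; apply/allP => k; rewrite mem_enum.
by [].
Qed.


Lemma lin_V_expand (lam phi : fT) (c : K -> R) : (forall k, ~~ free k -> c k = 0) ->
  A lam phi (lin1 c) (lin2 c) = \sum_(k | free k) c k * A lam phi (lin1 (dlt k)) (lin2 (dlt k)).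
Proof. by move=> cz; apply: (expand (A lam phi)) => // *; exact: Alin2. Qed.

Lemma AxG (c : K -> R) : (forall k, ~~ free k -> c k = 0) -> forall l, free l ->
  A (lin1 c) (lin2 c) (lin1 (dlt l)) (lin2 (dlt l)) =
  \sum_(k | free k) c k * A (lin1 (dlt k)) (lin2 (dlt k)) (lin1 (dlt l)) (lin2 (dlt l)).
Proof.
move=> cz l fl.
have [V1 V2] := inV_lin _ cz.
have [V3 V4] := inV_lin _ (dlt_V l fl).
rewrite Asym // lin_V_expand //; apply: eq_bigr => k fk.
have [V5 V6] := inV_lin _ (dlt_V k fk).
by rewrite Asym.
Qed.

Lemma riesz_main (F : fT -> fT -> R) :
  (forall (a : R) mu1 psi1 mu2 psi2,
     inVl ND mu1 -> inVl ND psi1 -> inVl ND mu2 -> inVl ND psi2 ->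
     F (fun nd => a *: mu1 nd + mu2 nd) (fun nd => a *: psi1 nd + psi2 nd)
     = a * F mu1 psi1 + F mu2 psi2) ->
  exists lam phi, [/\ inVl ND lam, inVl ND phi,
    (forall mu psi, inVl ND mu -> inVl ND psi -> A lam phi mu psi = F mu psi) &
    (forall lam' phi', inVl ND lam' -> inVl ND phi' ->
       (forall mu psi, inVl ND mu -> inVl ND psi -> A lam' phi' mu psi = F mu psi) ->
       lam' = lam /\ phi' = phi)].
Proof.
move=> Flin.
pose G k l := A (lin1 (dlt k)) (lin2 (dlt k)) (lin1 (dlt l)) (lin2 (dlt l)).
have pd : forall c : K -> R, (exists k, free k && (c k != 0)) ->
    0 < \sum_(k | free k) \sum_(l | free l) c k * G k l * c l.
  move=> c [k /andP[fk ck]].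
  pose c' k := if free k then c k else 0.
  have cz' : forall k, ~~ free k -> c' k = 0 by move=> k0 /negbTE f0; rewrite /c' f0.
  have [V1 V2] := inV_lin _ cz'.
  have nz : exists nd, lin1 c' nd != 0 \/ lin2 c' nd != 0.
    move: k fk ck => [[nd i] b] fk ck; exists nd.
    case: b fk ck => fk ck; [right|left]; apply/eqP => /matrixP /(_ i 0);
      rewrite !mxE /c' fk => E; by rewrite E eqxx in ck.
  have := Apd _ _ V1 V2 nz.
  rewrite lin_V_expand //.
  have -> : \sum_(l | free l) c' l * A (lin1 c') (lin2 c') (lin1 (dlt l)) (lin2 (dlt l)) =
     \sum_(l | free l) c l * \sum_(k | free k) c k * G k l.
    apply: eq_bigr => l fl; rewrite AxG // /c' fl; congr (_ * _).
    by apply: eq_bigr => k0 fk0; rewrite fk0.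
  under eq_bigr => l _ do rewrite big_distrr /=.
  rewrite exchange_big /=.
  move=> H; apply: lt_le_trans H _; rewrite le_eqVlt; apply/orP; left; apply/eqP.
  apply: eq_bigr => k0 _; apply: eq_bigr => l _; rewrite /G; ring.
have [c [cz Hc]] := riesz_sub free G pd (fun l => F (lin1 (dlt l)) (lin2 (dlt l))).
have [V1 V2] := inV_lin _ cz.
have sol : forall mu psi, inVl ND mu -> inVl ND psi -> A (lin1 c) (lin2 c) mu psi = F mu psi.
  move=> mu psi Vm Vs.
  have dz := coord_V _ _ Vm Vs.
  have E : A (lin1 c) (lin2 c) mu psi =
     A (lin1 c) (lin2 c) (lin1 (coord mu psi)) (lin2 (coord mu psi)).
    by rewrite lin1_coord lin2_coord.
  have E' : F mu psi = F (lin1 (coord mu psi)) (lin2 (coord mu psi)).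
    by rewrite lin1_coord lin2_coord.
  rewrite E E' lin_V_expand // (expand F) //.
  by apply: eq_bigr => l fl; rewrite AxG // Hc.
exists (lin1 c), (lin2 c); split => // lam' phi' Vl' Vp' sol'.
pose z1 := fun nd => (-1) *: lin1 c nd + lam' nd.
pose z2 := fun nd => (-1) *: lin2 c nd + phi' nd.
have Vz1 : inVl ND z1 by apply: inV_comb.
have Vz2 : inVl ND z2 by apply: inV_comb.
have Az : forall mu psi, inVl ND mu -> inVl ND psi -> A z1 z2 mu psi = 0.
  move=> mu psi Vm Vs.
  rewrite Asym // Alin2 (Asym mu psi (lin1 c)) // (Asym mu psi lam') //.
  by rewrite sol // sol' // mulN1r addNr.
have zz : forall nd, z1 nd = 0 /\ z2 nd = 0.
  move=> nd; case: (boolP [exists nd, (z1 nd != 0) || (z2 nd != 0)]).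
    move=> /existsP [nd0 /orP H].
    have := Apd _ _ Vz1 Vz2 (ex_intro _ nd0 H).
    by rewrite Az // ltxx.
  rewrite negb_exists => /forallP /(_ nd); rewrite negb_or !negbK.
  by move=> /andP[/eqP -> /eqP ->].
split; apply: funext => nd; have [E1 E2] := zz nd.
  by move: E1; rewrite /z1 scaleN1r addrC => /subr0_eq.
by move: E2; rewrite /z2 scaleN1r addrC => /subr0_eq.
Qed.

End Riesz.


Section Main.
Context (R : realType) (nN : nat) (E : finType)
  (pos : 'I_nN -> 'cV[R]_3) (ea eb : E -> 'I_nN)
  (Cn Cm : E -> R -> 'M[R]_3) (alpha_n beta_n alpha_m beta_m : R)
  (ND : {set 'I_nN}) (N M : edge_op R E).
Hypothesis Hpos : injective pos.
Hypothesis Hlt : forall e, (val (ea e) < val (eb e))%N.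
Hypothesis Hconn : graph_connected ea eb.
Hypothesis an0 : 0 < alpha_n.
Hypothesis bn0 : 0 < beta_n.
Hypothesis am0 : 0 < alpha_m.
Hypothesis bm0 : 0 < beta_m.
Hypothesis HC : forall e x, 0 <= x <= edge_len pos ea eb e ->
     [/\ (Cn e x)^T = Cn e x, (Cm e x)^T = Cm e x,
      forall xi : 'cV[R]_3,
        alpha_n * dotv xi xi <= dotv (Cn e x *m xi) xi <= beta_n * dotv xi xi &
      forall xi : 'cV[R]_3,
        alpha_m * dotv xi xi <= dotv (Cm e x *m xi) xi <= beta_m * dotv xi xi].
Hypothesis HND : ND != finset.set0.
Hypothesis Hsol : forall e ua ub ra rb, exists u r dn dm : R -> 'cV[R]_3,
     local_solution (edge_len pos ea eb e) (edge_dir pos ea eb e) (Cn e) (Cm e)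
       ua ub ra rb (fun _ => 0) (fun _ => 0)
       u r (N e ua ub ra rb) (M e ua ub ra rb) dn dm.

Local Notation hl := (edge_len pos ea eb).
Local Notation A := (Aform pos ea eb ND N M).

Lemma hl_gt0 e : 0 < hl e.
Proof.
rewrite /edge_len /normv sqrtr_gt0; apply: dotv_gt0.
rewrite subr_eq0; apply/negP => /eqP /Hpos E1.
by have := Hlt e; rewrite E1 ltnn.
Qed.

Lemma A_V lam phi mu psi : inVl ND mu -> inVl ND psi ->
  A lam phi mu psi = - \sum_e (bnd (hl e) (mu (ea e)) (mu (eb e)) (at_edge ea eb N lam phi e)
      + bnd (hl e) (psi (ea e)) (psi (eb e)) (at_edge ea eb M lam phi e)).
Proof.
move=> Vmu Vpsi; rewrite /Aform big_mkcond /=; congr (- _).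
rewrite big_split /= -!jump_sum -big_split /=; apply: eq_bigr => nd _.
case: ifP => // /negbFE ndND.
by rewrite Vmu // Vpsi // !dotv0r addr0.
Qed.

Lemma energy lam phi mu psi : inVl ND mu -> inVl ND psi ->
  A lam phi mu psi =
      \sum_(e : E)
        (ip (hl e) (fun x => invmx (Cn e x) *m at_edge ea eb N lam phi e x)
            (at_edge ea eb N mu psi e)
       + ip (hl e) (fun x => invmx (Cm e x) *m at_edge ea eb M lam phi e x)
            (at_edge ea eb M mu psi e)).
Proof.
move=> Vmu Vpsi; rewrite A_V // -sumrN; apply: eq_bigr => e _.
have [u [r [dn [dm S1]]]] := Hsol e (lam (ea e)) (lam (eb e)) (phi (ea e)) (phi (eb e)).
have [u' [r' [dn' [dm' S2]]]] := Hsol e (mu (ea e)) (mu (eb e)) (psi (ea e)) (psi (eb e)).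
have := loc_energy S2 S1; rewrite /at_edge => <-.
rewrite (@ipC_sym _ _ (Cn e) (N e (lam (ea e)) (lam (eb e)) (phi (ea e)) (phi (eb e)))); last by move=> x /HC [].
rewrite (@ipC_sym _ _ (Cm e) (M e (lam (ea e)) (lam (eb e)) (phi (ea e)) (phi (eb e)))); last by move=> x /HC [].
by rewrite opprB opprK addrC.
Qed.

Lemma A_sym lam phi mu psi : inVl ND lam -> inVl ND phi -> inVl ND mu -> inVl ND psi ->
  A lam phi mu psi = A mu psi lam phi.
Proof.
move=> Vl Vp Vm Vs; rewrite !energy //; apply: eq_bigr => e _.
by congr (_ + _); apply: ipC_sym => x /HC [].
Qed.

Lemma A_ge0 lam phi : inVl ND lam -> inVl ND phi -> 0 <= A lam phi lam phi.
Proof.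
move=> Vl Vp; rewrite energy //; apply: sumr_ge0 => e _; apply: addr_ge0.
- by apply: (ipC_ge0 _ _ _ _ _ an0 bn0) => x /HC [].
- by apply: (ipC_ge0 _ _ _ _ _ am0 bm0) => x /HC [].
Qed.

Lemma A_pd lam phi : inVl ND lam -> inVl ND phi ->
  (exists nd, lam nd != 0 \/ phi nd != 0) -> 0 < A lam phi lam phi.
Proof.
move=> Vl Vp [nd Hnd]; rewrite lt_neqAle A_ge0 // andbT.
apply/negP => /eqP /esym A0.
have Hz : forall e, (phi (ea e) = phi (eb e)) /\ (phi (ea e) = 0 -> lam (ea e) = lam (eb e)).
  move=> e.
  have [u [r [dn [dm S1]]]] := Hsol e (lam (ea e)) (lam (eb e)) (phi (ea e)) (phi (eb e)).
  rewrite energy // in A0.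
  have Hx : 0 <= ip (hl e) (fun x => invmx (Cn e x) *m at_edge ea eb N lam phi e x) (at_edge ea eb N lam phi e).
    by apply: (ipC_ge0 _ _ _ _ _ an0 bn0) => x /HC [].
  have Hy : 0 <= ip (hl e) (fun x => invmx (Cm e x) *m at_edge ea eb M lam phi e x) (at_edge ea eb M lam phi e).
    by apply: (ipC_ge0 _ _ _ _ _ am0 bm0) => x /HC [].
  have Hge : forall i : E, true -> 0 <= ip (hl i) (fun x => invmx (Cn i x) *m at_edge ea eb N lam phi i x) (at_edge ea eb N lam phi i) + ip (hl i) (fun x => invmx (Cm i x) *m at_edge ea eb M lam phi i x) (at_edge ea eb M lam phi i).
    move=> i _; apply: addr_ge0.
    - by apply: (ipC_ge0 _ _ _ _ _ an0 bn0) => x /HC [].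
    - by apply: (ipC_ge0 _ _ _ _ _ am0 bm0) => x /HC [].
  move: (psumr_eq0P Hge A0) => /(_ e isT).
  move=> /eqP; rewrite paddr_eq0 // => /andP[/eqP X0 /eqP Y0].
  exact: (loc_zero (hl_gt0 e) an0 bn0 am0 bm0 (HC e) S1 X0 Y0).
have [nd0 nd0ND] := set0Pn _ HND.
have phi0 : forall y, phi y = 0.
  move=> y; rewrite (@const_graph _ _ ea eb _ phi Hconn (fun e => proj1 (Hz e)) y nd0).
  exact: Vp.
have lam0 : forall y, lam y = 0.
  move=> y.
  have Hl : forall e, lam (ea e) = lam (eb e) by move=> e; apply: (proj2 (Hz e)); exact: phi0.
  rewrite (@const_graph _ _ ea eb _ lam Hconn Hl y nd0); exact: Vl.
by move: Hnd; rewrite lam0 phi0 eqxx; case.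
Qed.


Lemma main_all :
  let A := Aform pos ea eb ND N M in
  [/\
   (forall lam phi mu psi, inVl ND lam -> inVl ND phi -> inVl ND mu -> inVl ND psi ->
      A lam phi mu psi =
      \sum_(e : E)
        (ip (edge_len pos ea eb e)
            (fun x => invmx (Cn e x) *m at_edge ea eb N lam phi e x)
            (at_edge ea eb N mu psi e)
       + ip (edge_len pos ea eb e)
            (fun x => invmx (Cm e x) *m at_edge ea eb M lam phi e x)
            (at_edge ea eb M mu psi e))),
   (forall lam phi mu psi, inVl ND lam -> inVl ND phi -> inVl ND mu -> inVl ND psi ->
      A lam phi mu psi = A mu psi lam phi),
   (forall lam phi, inVl ND lam -> inVl ND phi ->
      (exists nd, lam nd != 0 \/ phi nd != 0) -> 0 < A lam phi lam phi) &
   (forall F : ('I_nN -> 'cV[R]_3) -> ('I_nN -> 'cV[R]_3) -> R,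
      (forall (a : R) mu1 psi1 mu2 psi2,
         inVl ND mu1 -> inVl ND psi1 -> inVl ND mu2 -> inVl ND psi2 ->
         F (fun nd => a *: mu1 nd + mu2 nd) (fun nd => a *: psi1 nd + psi2 nd)
         = a * F mu1 psi1 + F mu2 psi2) ->
      exists lam phi, [/\ inVl ND lam, inVl ND phi,
        (forall mu psi, inVl ND mu -> inVl ND psi -> A lam phi mu psi = F mu psi) &
        (forall lam' phi', inVl ND lam' -> inVl ND phi' ->
           (forall mu psi, inVl ND mu -> inVl ND psi -> A lam' phi' mu psi = F mu psi) ->
           lam' = lam /\ phi' = phi)])].
Proof.
move=> A; split.
- by move=> lam phi mu psi _ _ Vm Vs; exact: energy.
- by move=> lam phi mu psi Vl Vp Vm Vs; exact: A_sym.
- by move=> lam phi Vl Vp Hn; exact: A_pd.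
- move=> F Flin.
  apply: (@riesz_main R nN ND A) => //.
  + by move=> *; exact: Aform_lin2.
  + by move=> *; exact: A_sym.
  + by move=> *; exact: A_pd.
Qed.

End Main.

Theorem lemma3p3 (R : realType) (nN : nat) (E : finType)
  (pos : 'I_nN -> 'cV[R]_3) (ea eb : E -> 'I_nN)
  (Cn Cm : E -> R -> 'M[R]_3) (alpha_n beta_n alpha_m beta_m : R)
  (ND : {set 'I_nN}) (N M : edge_op R E) :
  injective pos ->
  (forall e, (val (ea e) < val (eb e))%N) ->
  injective (fun e => (ea e, eb e)) ->
  graph_connected ea eb ->
  0 < alpha_n -> 0 < beta_n -> 0 < alpha_m -> 0 < beta_m ->
  (forall e (i j : 'I_3),
     measurable_fun (edge_dom (edge_len pos ea eb e)) (fun x => Cn e x i j) /\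
     measurable_fun (edge_dom (edge_len pos ea eb e)) (fun x => Cm e x i j)) ->
  (forall e x, 0 <= x <= edge_len pos ea eb e ->
     [/\ (Cn e x)^T = Cn e x, (Cm e x)^T = Cm e x,
      forall xi : 'cV[R]_3,
        alpha_n * dotv xi xi <= dotv (Cn e x *m xi) xi <= beta_n * dotv xi xi &
      forall xi : 'cV[R]_3,
        alpha_m * dotv xi xi <= dotv (Cm e x *m xi) xi <= beta_m * dotv xi xi]) ->
  ND != finset.set0 ->
  (* N e, M e are the n_e, m_e components of the local solver with f = g = 0 *)
  (forall e ua ub ra rb, exists u r dn dm : R -> 'cV[R]_3,
     local_solution (edge_len pos ea eb e) (edge_dir pos ea eb e) (Cn e) (Cm e)
       ua ub ra rb (fun _ => 0) (fun _ => 0)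
       u r (N e ua ub ra rb) (M e ua ub ra rb) dn dm) ->
  let A := Aform pos ea eb ND N M in
  [/\
   (* the energy identity *)
   (forall lam phi mu psi, inVl ND lam -> inVl ND phi -> inVl ND mu -> inVl ND psi ->
      A lam phi mu psi =
      \sum_(e : E)
        (ip (edge_len pos ea eb e)
            (fun x => invmx (Cn e x) *m at_edge ea eb N lam phi e x)
            (at_edge ea eb N mu psi e)
       + ip (edge_len pos ea eb e)
            (fun x => invmx (Cm e x) *m at_edge ea eb M lam phi e x)
            (at_edge ea eb M mu psi e))),
   (* symmetry *)
   (forall lam phi mu psi, inVl ND lam -> inVl ND phi -> inVl ND mu -> inVl ND psi ->
      A lam phi mu psi = A mu psi lam phi),
   (* positive definiteness *)
   (forall lam phi, inVl ND lam -> inVl ND phi ->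
      (exists nd, lam nd != 0 \/ phi nd != 0) -> 0 < A lam phi lam phi) &
   (* unique solvability for every linear functional F on V_lambda x V_lambda *)
   (forall F : ('I_nN -> 'cV[R]_3) -> ('I_nN -> 'cV[R]_3) -> R,
      (forall (a : R) mu1 psi1 mu2 psi2,
         inVl ND mu1 -> inVl ND psi1 -> inVl ND mu2 -> inVl ND psi2 ->
         F (fun nd => a *: mu1 nd + mu2 nd) (fun nd => a *: psi1 nd + psi2 nd)
         = a * F mu1 psi1 + F mu2 psi2) ->
      exists lam phi, [/\ inVl ND lam, inVl ND phi,
        (forall mu psi, inVl ND mu -> inVl ND psi -> A lam phi mu psi = F mu psi) &
        (forall lam' phi', inVl ND lam' -> inVl ND phi' ->
           (forall mu psi, inVl ND mu -> inVl ND psi -> A lam' phi' mu psi = F mu psi) ->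
           lam' = lam /\ phi' = phi)])].
Proof.
move=> Hpos Hlt Hinj Hconn an0 bn0 am0 bm0 Hmeas HC HND Hsol.
exact: (@main_all R nN E pos ea eb Cn Cm alpha_n beta_n alpha_m beta_m ND N M Hpos Hlt Hconn an0 bn0 am0 bm0 HC HND Hsol).
Qed.
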